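(* If $L$ is a regular language, then ${\rm bdi}(L)$ is regular.
   Context: For a word $w=a_1\cdots a_n$, ${\rm fh}(w)=a_1\cdots a_{\lfloor n/2\rfloor}$ and ${\rm lh}(w)=a_{\lfloor n/2\rfloor+1}\cdots a_n$. For words $x=a_1\cdots a_m$ and $y=b_1\cdots b_m$ the perfect shuffle is $x\,\text{sh}\,y=a_1b_1\cdots a_mb_m$, and if $y=b_1\cdots b_{m+1}$ has length $m+1$ then $x\,\text{sh}\,y=a_1b_1\cdots a_mb_mb_{m+1}$. ${\rm bdi}(w)={\rm fh}(w)\,\text{sh}\,{\rm lh}(w)$ and ${\rm bdi}(L)=\{{\rm bdi}(w):w\in L\}$. *)

(* Defs.v *)
From mathcomp Require Import all_boot.
Set Implicit Arguments. Unset Strict Implicit. Unset Printing Implicit Defensive.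

Definition lang (A : Type) := seq A -> Prop.

Record dfa (A : finType) := DFA {
  dfa_state : finType;
  dfa_start : dfa_state;
  dfa_final : pred dfa_state;
  dfa_trans : dfa_state -> A -> dfa_state }.

Definition dfa_run (A : finType) (M : dfa A) (q : dfa_state M) (w : seq A) :=
  foldl (@dfa_trans A M) q w.

Definition dfa_accept (A : finType) (M : dfa A) (w : seq A) : bool :=
  @dfa_final A M (@dfa_run A M (@dfa_start A M) w).

Definition regular (A : finType) (L : lang A) : Prop :=
  exists M : dfa A, forall w, L w <-> dfa_accept M w.

Definition fh (A : Type) (w : seq A) := take (size w)./2 w.
Definition lh (A : Type) (w : seq A) := drop (size w)./2 w.

(* perfect shuffle a1 b1 a2 b2 ... ; extra letters (only ever b_{m+1} here)
   are appended at the end *)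
Fixpoint shuffle (A : Type) (x y : seq A) : seq A :=
  match x, y with
  | a :: x', b :: y' => a :: b :: shuffle x' y'
  | [::], _ => y
  | _, [::] => x
  end.

Definition bdi (A : Type) (w : seq A) := shuffle (fh w) (lh w).

Definition bdi_lang (A : Type) (L : lang A) : lang A :=
  fun v => exists w, L w /\ v = bdi w.

(* Main.v *)
Require Import Defs.
From mathcomp Require Import all_boot.

Section Bdi.
Variables (A : finType) (M : dfa A).
Local Notation Q := (dfa_state M).
Definition St := (Q * {ffun Q -> Q} * option A)%type.

Definition trans' (st : St) (c : A) : St :=
  match st with
  | (p, f, None) => (p, f, Some c)
  | (p, f, Some a) => (dfa_trans p a, [ffun q => dfa_trans (f q) c], None)
  end.

Definition final' (st : St) : bool :=
  match st with
  | (p, f, None) => dfa_final (f p)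
  | (p, f, Some c) => dfa_final (dfa_trans (f p) c)
  end.

Definition M' : dfa A := @DFA A St (dfa_start M, [ffun q => q], None)
   final' trans'.

Lemma run_sh x y p f : size x = size y ->
  foldl trans' (p, f, None) (shuffle x y) =
  (dfa_run p x, [ffun q => dfa_run (f q) y], None).
Proof.
elim: x y p f => [|a x IH] [|b y] p f //= H.
  by congr (_, _, _); apply/ffunP => q; rewrite ffunE.
case: H => H; rewrite IH //; congr (_, _, _); apply/ffunP => q; rewrite !ffunE //.
Qed.

Lemma sh_rcons (x y : seq A) c : size x = size y ->
  shuffle x (rcons y c) = rcons (shuffle x y) c.
Proof. by elim: x y => [|a x IH] [|b y] //= [H]; rewrite IH. Qed.

Lemma accept_sh x y : (size y == size x) || (size y == (size x).+1) ->
  dfa_accept M' (shuffle x y) = dfa_accept M (x ++ y).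
Proof.
case/orP => /eqP H.
  by rewrite /dfa_accept /dfa_run /= run_sh // /= !ffunE /dfa_run foldl_cat.
move: H; case/lastP: y => [|y c] //; rewrite size_rcons => -[H].
rewrite sh_rcons // /dfa_accept /dfa_run /= -cats1 foldl_cat run_sh //=.
by rewrite !ffunE /dfa_run -cats1 !foldl_cat.
Qed.

Lemma decomp n (v : seq A) : size v <= n -> exists x y,
  ((size y == size x) || (size y == (size x).+1)) /\ v = shuffle x y.
Proof.
elim: n v => [|n IH] [|a [|b v]] //= Hs.
- by exists [::], [::].
- by exists [::], [::].
- by exists [::], [:: a].
- have [x [y [Hxy ->]]] := IH v (leq_trans (leqnSn _) Hs).
  by exists (a :: x), (b :: y).
Qed.
End Bdi.

Theorem mainTheorem13 (A : finType) (L : lang A) :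
  regular L -> regular (bdi_lang L).
Proof.
case=> M HM; exists (@M' A M) => v; split.
  case=> w [Lw ->]; rewrite /bdi accept_sh; last first.
    rewrite /fh /lh size_drop size_takel; last first.
      by rewrite -{2}(odd_double_half (size w)) -addnn addnA leq_addl.
    have := odd_double_half (size w); rewrite -addnn.
    move: (size w)./2 => k; case: odd => /= <-.
      by rewrite add1n -addSn addnK eqxx orbT.
    by rewrite add0n addnK eqxx.
  by rewrite cat_take_drop; apply/HM.
have [x [y [Hxy ->]]] := @decomp A _ _ (leqnn (size v)).
rewrite accept_sh // => /HM Lw; exists (x ++ y); split => //.
have Hh : (size (x ++ y))./2 = size x.
  rewrite size_cat; case/orP: Hxy => /eqP ->; first by rewrite addnn doubleK.
  by rewrite addnS addnn /= uphalf_double.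
by rewrite /bdi /fh /lh Hh take_size_cat // drop_size_cat.
Qed.
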